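(* There exists a quantum algorithm which, given the value $a>0$ of the initial success probability of $\mathcal A$, outputs a basis element $z$ with $\chi(z)=1$ with certainty (probability $1$), using a number of applications of $\mathcal A$ and $\mathcal A^{-1}$ (together with $\mathbf S_\chi$, $\mathbf S_0$-type phase operators and auxiliary gates not depending on $\chi$ or $\mathcal A$) that is in $\Theta(1/\sqrt a)$ in the worst case.
   Context: Let $\mathcal H$ be a finite-dimensional Hilbert space with a fixed orthonormal computational basis $\{|x\rangle\}$ indexed by a finite set of nonnegative integers containing $0$. Let $\chi:\mathbb Z\to\{0,1\}$ be a Boolean function; a basis state $|x\rangle$ is good if $\chi(x)=1$. For a state $|\Upsilon\rangle$, let $|\Upsilon_1\rangle$ be its orthogonal projection onto the span of the good basis states. Let $\mathcal A$ be a unitary on $\mathcal H$ (a quantum algorithm using no measurements), $|\Psi\rangle=\mathcal A|0\rangle$, and $a=\langle\Psi_1|\Psi_1\rangle$ its initial success probability. *)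

(* Defs.v *)
From mathcomp Require Import all_boot all_algebra.
From mathcomp Require Import reals complex spectral.
Set Implicit Arguments. Unset Strict Implicit. Unset Printing Implicit Defensive.
Import GRing.Theory Num.Theory.
Local Open Scope ring_scope.

Section QAlg.
Variable R : realType.
Local Notation C := (R[i]).

(* Hilbert space H = C^(n+1), computational basis |x>, x : 'I_(n.+1), |0> = ord0.
   A state is a column vector. *)
Definition ket0 (n : nat) : 'cV[C]_(n.+1) := delta_mx ord0 0.

Definition good_prob (n : nat) (chi : int -> bool) (psi : 'cV[C]_(n.+1)) : C :=
  \sum_(x < n.+1 | chi (nat_of_ord x)%:Z) `|psi x 0| ^+ 2.

Definition S_chi (n : nat) (chi : int -> bool) (phi : C) : 'M[C]_(n.+1) :=
  diag_mx (\row_(x < n.+1) if chi (nat_of_ord x)%:Z then phi else 1).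

Definition S_0 (n : nat) (phi : C) : 'M[C]_(n.+1) :=
  diag_mx (\row_(x < n.+1) if x == ord0 then phi else 1).

(* Gates available to the algorithm. Aux gates are explicit matrices chosen by
   the algorithm, hence independent of chi and A. *)
Inductive gate (n : nat) : Type :=
  | GA : gate n
  | GAinv : gate n
  | GSchi : C -> gate n
  | GS0 : C -> gate n
  | GAux : 'M[C]_(n.+1) -> gate n.

Definition gate_ok (n : nat) (g : gate n) : Prop :=
  match g with
  | GA | GAinv => True
  | GSchi phi | GS0 phi => `|phi| = 1
  | GAux U => U \is unitarymx
  end.

Fixpoint circuit_ok (n : nat) (s : seq (gate n)) : Prop :=
  match s with
  | [::] => True
  | g :: s' => gate_ok g /\ circuit_ok s'
  end.

Definition gate_mx (n : nat) (chi : int -> bool) (A : 'M[C]_(n.+1)) (g : gate n)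
  : 'M[C]_(n.+1) :=
  match g with
  | GA => A
  | GAinv => invmx A
  | GSchi phi => S_chi n chi phi
  | GS0 phi => S_0 n phi
  | GAux U => U
  end.

(* Run the circuit (gates applied left to right, first gate first) on psi. *)
Fixpoint run (n : nat) (chi : int -> bool) (A : 'M[C]_(n.+1)) (s : seq (gate n))
  (psi : 'cV[C]_(n.+1)) : 'cV[C]_(n.+1) :=
  match s with
  | [::] => psi
  | g :: s' => run chi A s' (gate_mx chi A g *m psi)
  end.

Definition cost (n : nat) (s : seq (gate n)) : nat :=
  count (fun g => match g with GA | GAinv => true | _ => false end) s.

End QAlg.

(* Main.v *)
Require Import Defs.
From mathcomp Require Import all_boot all_algebra.
From mathcomp Require Import reals complex spectral.
From mathcomp Require Import all_order ring lra zify.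
Import Order.TTheory GRing.Theory Num.Theory.
Local Open Scope ring_scope.
Local Open Scope complex_scope.
Set Implicit Arguments. Unset Strict Implicit.

Section Core.
Variable R : realType.
Local Notation C := (R[i]).

Definition cstep (a : R) (p : C * C) (st : C * C) : C * C :=
  let g := p.1 * st.1 * a%:C + st.2 * (1 - a)%:C in
  (p.1 * st.1 + (p.2 - 1) * g, st.2 + (p.2 - 1) * g).

Definition cfold (a : R) (L : seq (C * C)) (st : C * C) : C * C :=
  foldl (fun st p => cstep a p st) st L.

Definition rstd (a : R) (z : R * R) : R * R :=
  let g := - z.1 * a + z.2 * (1 - a) in (- z.1 - 2 * g, z.2 - 2 * g).

Lemma cstep_std a (A B : R) :
  cstep a (-1, -1) (A%:C, B%:C) = ((rstd a (A, B)).1%:C, (rstd a (A, B)).2%:C).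
Proof.
rewrite /cstep /rstd /=; congr pair;
rewrite !(rmorphB, rmorphD, rmorphM, rmorphN, rmorph1) /=;
ring.
Qed.

Lemma cfold_nseq a k (A B : R) :
  cfold a (nseq k (-1, -1)) (A%:C, B%:C) =
  ((iter k (rstd a) (A, B)).1%:C, (iter k (rstd a) (A, B)).2%:C).
Proof.
elim: k A B => [//|k IH] A B /=.
rewrite cstep_std -/(cfold _ _ _) IH; by rewrite -iterSr.
Qed.

Lemma final_step a s c (x y sg : R) :
  0 < s -> 0 < c -> s ^+ 2 = a -> c ^+ 2 = 1 - a ->
  0 <= x -> 0 < y -> `|1 - 2 * a| * x <= 2 * s * c * y ->
  exists ph1 ph2 : C, [/\ `|ph1| = 1, `|ph2| = 1 &
    (cstep a (ph1, ph2) ((sg * (y / s))%:C, (sg * (x / c))%:C)).2 = 0].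
Proof.
move=> s0 c0 hs hc x0 y0 hcond.
have sn0 : s != 0 by exact: lt0r_neq0.
have cn0 : c != 0 by exact: lt0r_neq0.
have hg (ph : C) : ph * (sg * (y / s))%:C * a%:C + (sg * (x / c))%:C * (1 - a)%:C
    = sg%:C * (ph * (y * s)%:C + (x * c)%:C).
  have e1 : (sg * (y / s)) * a = sg * (y * s) by rewrite -hs; field.
  have e2 : (sg * (x / c)) * (1 - a) = sg * (x * c) by rewrite -hc; field.
  rewrite -mulrA -rmorphM e1 -rmorphM e2 !rmorphM; ring.
have [->|xpos] := eqVneq x 0.
  exists 1, 1; split; rewrite ?normr1 //.
  by rewrite /cstep /= subrr !mul0r addr0 mulr0.
have xp : 0 < x by rewrite lt_neqAle eq_sym xpos x0.
set r := - (1 - 2 * a) * x / (2 * s * c * y).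
have den0 : 0 < 2 * s * c * y by rewrite !mulr_gt0.
have hr : r ^+ 2 <= 1.
  have : `|r| <= 1.
    rewrite /r !normrM normrN normfV (gtr0_norm den0) (ger0_norm x0).
    by rewrite ler_pdivrMr // mul1r.
  move=> h; rewrite -(ger0_norm (sqr_ge0 r)) normrX.
  rewrite expr_le1 //.
set q := Num.sqrt (1 - r ^+ 2).
exists (Complex r q).
set E : C := Complex (r * (y * s) + x * c) (q * (y * s)).
have hE : Complex r q * (y * s)%:C + (x * c)%:C = E.
  by rewrite /E; simpc.
have ReE : r * (y * s) + x * c = x / c / 2.
  have e : (1 - 2 * a) = c ^+ 2 - s ^+ 2 by rewrite hc -hs; ring.
  have e2 : x / c / 2 = x * (c ^+ 2 + s ^+ 2) / c / 2 by rewrite hc hs subrK mulr1.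
  have yn0 : y != 0 by exact: lt0r_neq0.
  rewrite e2 /r e; field.
  by rewrite cn0 yn0 sn0.
have xc2 : 0 < x / c / 2 by rewrite !divr_gt0.
have En0 : E != 0.
  apply/eqP => /(congr1 (@complex.Re R)) /=; rewrite ReE => h.
  by move: xc2; rewrite h ltxx.
have hsum : E + conjc E = (x / c)%:C.
  rewrite /E; simpc; rewrite ReE; apply/eqP; rewrite eq_complex /= eqxx andbT.
  by apply/eqP; field.
pose ph2 : C := - (conjc E) / E.
exists ph2; split.
- rewrite normc_def /=.
  have -> : r ^+ 2 + q ^+ 2 = 1 by rewrite /q sqr_sqrtr ?subr_ge0 // addrC subrK.
  by rewrite sqrtr1.
- by rewrite /ph2 normf_div normrN normcJ divff // normr_eq0.
- rewrite /cstep /= hg hE.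
  rewrite /ph2.
  have -> : (- conjc E / E - 1) * (sg%:C * E) = - sg%:C * (E + conjc E) by field.
  by rewrite hsum rmorphM /= mulNr addrC addNr.
Qed.


Definition rrot (p q : R) (z : R * R) : R * R :=
  (p * z.1 - q * z.2, q * z.1 + p * z.2).

Lemma std_iter a s c k : 0 < s -> 0 < c -> s ^+ 2 = a -> c ^+ 2 = 1 - a ->
  iter k (rstd a) (1, 1) =
  ((-1) ^+ k * ((iter k (rrot (c ^+ 2 - s ^+ 2) (2 * s * c)) (c, s)).2 / s),
   (-1) ^+ k * ((iter k (rrot (c ^+ 2 - s ^+ 2) (2 * s * c)) (c, s)).1 / c)).
Proof.
move=> s0 c0 hs hc.
have sn0 : s != 0 by exact: lt0r_neq0.
have cn0 : c != 0 by exact: lt0r_neq0.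
elim: k => [|k IH].
  by rewrite /= !expr0 !mul1r !divff.
rewrite iterS IH iterS.
case: (iter k _ _) => x y.
rewrite /rstd /rrot /= [(-1) ^+ k.+1]exprS -hc -hs.
move: ((-1) ^+ k) => sg.
have h0 : c ^+ 2 + s ^+ 2 - 1 = 0 by rewrite hc hs; ring.
congr pair; apply/eqP; rewrite -subr_eq0; apply/eqP.
  transitivity (sg * y / s * (c ^+ 2 + s ^+ 2 - 1)); last by rewrite h0 mulr0.
  by field; rewrite cn0 sn0.
transitivity (- (sg * x / c * (c ^+ 2 + s ^+ 2 - 1))); last by rewrite h0 mulr0 oppr0.
by field; rewrite sn0 cn0.
Qed.

Lemma quad_step s c (x y : R) : 0 < s -> 0 < c -> s ^+ 2 + c ^+ 2 = 1 ->
  1 / 3 <= c - s ->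
  0 < x -> 0 < y -> x ^+ 2 + y ^+ 2 = 1 ->
  let z := rrot (c ^+ 2 - s ^+ 2) (2 * s * c) (x, y) in
  0 < z.2 /\ (y - x) + 2 * s / 3 <= z.2 - z.1.
Proof.
move=> s0 c0 hsc hcs x0 y0 hxy /=.
have hp : 0 < c ^+ 2 - s ^+ 2.
  have -> : c ^+ 2 - s ^+ 2 = (c - s) * (c + s) by ring.
  by rewrite mulr_gt0 //; lra.
split; first by apply: addr_gt0; apply: mulr_gt0 => //; rewrite !mulr_gt0.
have hxy1 : 1 <= x + y by nra.
have hy1 : y <= 1 by nra.
have t1 : 0 <= s * c * (x + y - 1) by rewrite !mulr_ge0 ?subr_ge0 // ltW.
have t2 : 0 <= s * s * (1 - (y - x)) by rewrite !mulr_ge0 ?subr_ge0 // ?ltW //; lra.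
have t3 : 0 <= s * (c - s - 1 / 3) by rewrite mulr_ge0 ?subr_ge0 // ltW.
have e : s ^+ 2 = 1 - c ^+ 2 by lra.
rewrite e.
nra.
Qed.


Lemma count_lemma a s c : 0 < s -> 0 < c -> s ^+ 2 = a -> c ^+ 2 = 1 - a -> a < 1 / 4 ->
  exists k, [/\ (k.+1 <= (Num.trunc (3 / s)).+1)%N,
    0 <= (iter k (rrot (c ^+ 2 - s ^+ 2) (2 * s * c)) (c, s)).1,
    0 < (iter k (rrot (c ^+ 2 - s ^+ 2) (2 * s * c)) (c, s)).2 &
    (iter k.+1 (rrot (c ^+ 2 - s ^+ 2) (2 * s * c)) (c, s)).1 <= 0].
Proof.
move=> s0 c0 hs hc ha.
set z := fun j => iter j (rrot (c ^+ 2 - s ^+ 2) (2 * s * c)) (c, s).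
rewrite -/(z _) -/(z _) -/(z _).
have hsc : s ^+ 2 + c ^+ 2 = 1 by rewrite hs hc; ring.
have hs2 : s < 1 / 2 by nra.
have hc2 : 5 / 6 < c by nra.
have hcs : 1 / 3 <= c - s by lra.
have hpq : (c ^+ 2 - s ^+ 2) ^+ 2 + (2 * s * c) ^+ 2 = 1.
  transitivity ((s ^+ 2 + c ^+ 2) ^+ 2); first by ring.
  by rewrite hsc expr1n.
have norm j : (z j).1 ^+ 2 + (z j).2 ^+ 2 = 1.
  elim: j => [|j IH]; first by rewrite /= addrC.
  move: IH; rewrite /z iterS; case: (iter j _ _) => x y /= IH.
  transitivity (((c ^+ 2 - s ^+ 2) ^+ 2 + (2 * s * c) ^+ 2) * (x ^+ 2 + y ^+ 2)).
    by ring.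
  by rewrite hpq IH mul1r.
have Hq j : (forall i, (i <= j)%N -> 0 < (z i).1) ->
    0 < (z j).2 /\ -1 + j%:R * (2 * s / 3) <= (z j).2 - (z j).1.
  elim: j => [|j IH] H.
    rewrite /= mul0r addr0; split => //.
    have : c <= 1 by nra.
    lra.
  have [y0 hb] := IH (fun i hi => H i (leqW hi)).
  have x0 := H j (leqnSn j).
  have hn := norm j.
  move: y0 hb x0 hn; rewrite /z iterS; case: (iter j _ _) => x y /= y0 hb x0 hn.
  have [h1 h2] := @quad_step s c x y s0 c0 hsc hcs x0 y0 hn.
  split => //.
  rewrite -addn1 natrD.
  move: h2 hb; rewrite /=.
  lra.
set J := (Num.trunc (3 / s)).+1.
have hJ : 3 < J%:R * s.
  rewrite -ltr_pdivrMr //.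
  exact: truncnS_gt.
have Hex : exists j, (j <= J)%N && ((z j).1 <= 0).
  case: (boolP [forall i : 'I_J.+1, 0 < (z i).1]).
    move/forallP => H; exfalso.
    have [y0 hb] := Hq J (fun i hi => H (Ordinal (hi : (i < J.+1)%N))).
    have x0 := H ord_max.
    have hn := norm J.
    move: y0 hb x0 hn; case: (z J) => x y /= y0 hb x0 hn.
    have hy1 : y <= 1 by nra.
    have e : J%:R * (2 * s / 3) = 2 / 3 * (J%:R * s) by ring.
    rewrite e in hb.
    move: (J%:R * s) hJ hb => t ht hb.
    lra.
  rewrite negb_forall => /existsP [i hi].
  by exists i; rewrite -ltnS ltn_ord /= leNgt.
case: (ex_minnP Hex) => m /andP [mJ xm] mmin.
case: m mJ xm mmin => [|k] mJ xm mmin.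
  by move: xm; rewrite /= leNgt c0.
have pos i : (i <= k)%N -> 0 < (z i).1.
  move=> hi; rewrite ltNge; apply/negP => hx.
  have := mmin i; rewrite hx andbT (leq_trans hi (leq_trans (leqnSn k) mJ)).
  move=> /(_ isT); rewrite leqNgt ltnS hi.
  done.
have [yk _] := Hq k pos.
exists k; split => //.
exact: ltW (pos k (leqnn k)).
Qed.


Lemma core (a : R) : 0 < a < 1 -> exists L : seq (C * C),
  [/\ all (fun p : C * C => (`|p.1| == 1) && (`|p.2| == 1)) L,
      (size L)%:R <= 4 / Num.sqrt a & (cfold a L (1, 1)).2 = 0].
Proof.
move=> /andP [a0 a1].
set s := Num.sqrt a; set c := Num.sqrt (1 - a).
have s0 : 0 < s by rewrite sqrtr_gt0.
have c0 : 0 < c by rewrite sqrtr_gt0 subr_gt0.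
have hs : s ^+ 2 = a by rewrite sqr_sqrtr // ltW.
have hc : c ^+ 2 = 1 - a by rewrite sqr_sqrtr // subr_ge0 ltW.
have sn0 : s != 0 by exact: lt0r_neq0.
have cn0 : c != 0 by exact: lt0r_neq0.
have s1 : s <= 1 by nra.
case: (leP (1 / 4) a) => ha.
  have hcond : `|1 - 2 * a| * c <= 2 * s * c * s.
    have h1 : `|1 - 2 * a| <= 2 * a by rewrite ler_norml; apply/andP; split; lra.
    have -> : 2 * s * c * s = (2 * a) * c by rewrite -hs; ring.
    by rewrite ler_wpM2r // ltW.
  have [ph1 [ph2 [n1 n2 h]]] := @final_step a s c c s 1 s0 c0 hs hc (ltW c0) s0 hcond.
  exists [:: (ph1, ph2)]; split.
  - by rewrite /= n1 n2 eqxx.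
  - by rewrite /= ler_pdivlMr // mul1r; lra.
  - by move: h; rewrite !mul1r !divff.
have [k [kJ xk yk xk1]] := @count_lemma a s c s0 c0 hs hc ha.
rewrite iterS in xk1.
case E : (iter k _ _) xk yk xk1 => [x y] /= xk yk xk1.
have hcond : `|1 - 2 * a| * x <= 2 * s * c * y.
  have -> : 1 - 2 * a = c ^+ 2 - s ^+ 2 by rewrite hc hs; ring.
  rewrite ger0_norm; first lra.
  rewrite hc hs; lra.
have [ph1 [ph2 [n1 n2 h]]] := @final_step a s c x y ((-1) ^+ k) s0 c0 hs hc xk yk hcond.
exists (rcons (nseq k (-1, -1)) (ph1, ph2)); split.
- by rewrite all_rcons /= n1 n2 eqxx /= all_nseq /= normrN normr1 eqxx orbT.
- rewrite size_rcons size_nseq.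
  apply: (@le_trans _ _ ((Num.trunc (3 / s)).+1)%:R); first by rewrite ler_nat.
  have ht : (Num.trunc (3 / s))%:R <= 3 / s by rewrite truncn_le divr_ge0 // ltW.
  have h4 : 3 / s + 1 <= 4 / s.
    have -> : 4 / s = 3 / s + 1 / s by rewrite -mulrDl; congr (_ / _); lra.
    by rewrite lerD2l ler_pdivlMr // mul1r.
  rewrite -addn1 natrD; lra.
- rewrite /cfold foldl_rcons -/(cfold a _ _).
  have -> : ((1 : C), (1 : C)) = ((1 : R)%:C, (1 : R)%:C) by [].
  by rewrite cfold_nseq (@std_iter a s c k s0 c0 hs hc) E.
Qed.

End Core.


Section Mat.
Local Open Scope sesquilinear_scope.
Variable R : realType.
Local Notation C := (R[i]).
Variable n : nat.
Implicit Types (u v w : 'cV[C]_n.+1).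

Definition ip u v : C := \sum_i Num.conj (u i 0) * v i 0.

Lemma ipE u v : ip u v = (u ^t* *m v) 0 0.
Proof. by rewrite /ip !mxE; apply: eq_bigr => i _; rewrite !mxE. Qed.

Lemma ip_unitary (U : 'M[C]_n.+1) v :
  U \is unitarymx -> ip (U *m v) (U *m v) = ip v v.
Proof.
move=> hU; rewrite !ipE trmx_mul map_mxM.
have hUU : U ^t* *m U = 1%:M by rewrite -invmx_unitary // mulVmx // unitarymx_unit.
by rewrite mulmxA -(mulmxA (v ^t*)) hUU mulmx1.
Qed.

Lemma diag_unitary (d : 'rV[C]_n.+1) :
  (forall i, `|d 0 i| = 1) -> diag_mx d \is unitarymx.
Proof.
move=> hd; apply/unitarymxP; apply/matrixP => i j.
rewrite mul_diag_mx !mxE eq_sym.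
have [<-|nij] := eqVneq j i.
  by rewrite !mulr1n -normCK hd expr1n.
by rewrite !mulr0n rmorph0 mulr0.
Qed.

Lemma gate_unitary chi (A : 'M[C]_n.+1) (g : gate R n) :
  A \is unitarymx -> gate_ok g -> gate_mx chi A g \is unitarymx.
Proof.
move=> hA; case: g => [| |phi|phi|U] /= h.
- exact: hA.
- by rewrite invmx_unitary // trmxC_unitary.
- by apply: diag_unitary => i; rewrite mxE; case: ifP => _ //; rewrite normr1.
- by apply: diag_unitary => i; rewrite mxE; case: ifP => _ //; rewrite normr1.
- exact: h.
Qed.

Lemma run_cat chi A (s1 s2 : seq (gate R n)) v :
  run chi A (s1 ++ s2) v = run chi A s2 (run chi A s1 v).
Proof. by elim: s1 v => //= g s1 IH v. Qed.

Lemma run_ip chi A (s : seq (gate R n)) v : A \is unitarymx -> circuit_ok s ->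
  ip (run chi A s v) (run chi A s v) = ip v v.
Proof.
move=> hA; elim: s v => //= g s IH v [hg hs].
by rewrite IH // ip_unitary // gate_unitary.
Qed.


Definition psi1 (chi : int -> bool) (p : 'cV[C]_n.+1) : 'cV[C]_n.+1 :=
  \col_x (if chi (nat_of_ord x)%:Z then p x 0 else 0).
Definition psi0 (chi : int -> bool) (p : 'cV[C]_n.+1) : 'cV[C]_n.+1 :=
  \col_x (if chi (nat_of_ord x)%:Z then 0 else p x 0).

Lemma psi_split chi p : p = psi1 chi p + psi0 chi p.
Proof.
apply/matrixP => i j; rewrite !mxE (ord1 j).
by case: ifP => _; rewrite ?addr0 ?add0r.
Qed.

Lemma Schi_act chi (p : 'cV[C]_n.+1) (ph al be : C) :
  S_chi n chi ph *m (al *: psi1 chi p + be *: psi0 chi p)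
  = (ph * al) *: psi1 chi p + be *: psi0 chi p.
Proof.
apply/matrixP => i j; rewrite /S_chi mul_diag_mx !mxE.
by case: ifP => _; ring.
Qed.

Lemma psiE (A : 'M[C]_n.+1) k : (A *m ket0 R n) k 0 = A k 0.
Proof.
rewrite mxE (bigD1 ord0) //= big1 ?addr0.
  by rewrite /ket0 mxE eqxx mulr1.
by move=> l nl; rewrite /ket0 mxE (negPf nl) mulr0.
Qed.

Lemma ip_ket0 : ip (ket0 R n) (ket0 R n) = 1.
Proof.
rewrite /ip (bigD1 ord0) //= big1 ?addr0.
  by rewrite /ket0 mxE eqxx /= rmorph1 mulr1.
by move=> l nl; rewrite /ket0 mxE (negPf nl) /= mulr0.
Qed.

Lemma refl_act (A : 'M[C]_n.+1) (ph : C) w : A \is unitarymx ->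
  A *m (S_0 n ph *m (invmx A *m w))
  = w + ((ph - 1) * ip (A *m ket0 R n) w) *: (A *m ket0 R n).
Proof.
move=> hA.
have hS u : S_0 n ph *m u = u + ((ph - 1) * u 0 0) *: ket0 R n.
  apply/matrixP => i j; rewrite /S_0 mul_diag_mx !mxE (ord1 j).
  by case: ifP => [/eqP ->|hi]; rewrite ?eqxx /=; ring.
rewrite hS mulmxDr -scalemxAr mulmxA mulmxV ?unitarymx_unit // mul1mx.
congr (_ + (_ * _) *: _).
rewrite invmx_unitary // /ip mxE; apply: eq_bigr => k _.
by rewrite psiE !mxE.
Qed.

Lemma ip_linD u v w : ip u (v + w) = ip u v + ip u w.
Proof. by rewrite /ip -big_split; apply: eq_bigr => i _; rewrite mxE mulrDr. Qed.

Lemma ip_linZ u (al : C) v : ip u (al *: v) = al * ip u v.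
Proof. by rewrite /ip mulr_sumr; apply: eq_bigr => i _; rewrite mxE mulrCA. Qed.

Lemma ip_psi1 chi p : ip p (psi1 chi p) = good_prob chi p.
Proof.
rewrite /ip /good_prob [in RHS]big_mkcond; apply: eq_bigr => i _; rewrite mxE.
case: ifP => _; last by rewrite mulr0.
by rewrite normCK mulrC.
Qed.

Lemma ip_psi0_ge0 chi p : 0 <= ip p (psi0 chi p).
Proof.
rewrite /ip; apply: sumr_ge0 => i _; rewrite mxE.
case: ifP => _; first by rewrite mulr0.
by rewrite mulrC -normCK exprn_ge0.
Qed.

Lemma good_prob_full chi p (al : C) :
  good_prob chi (al *: psi1 chi p + 0 *: psi0 chi p)
  = ip (al *: psi1 chi p + 0 *: psi0 chi p) (al *: psi1 chi p + 0 *: psi0 chi p).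
Proof.
rewrite scale0r addr0 /ip /good_prob [in LHS]big_mkcond; apply: eq_bigr => i _; rewrite !mxE.
case: ifP => h; rewrite ?h; first by rewrite normCK [in LHS]mulrC.
by rewrite !mulr0.
Qed.


Definition blk (p : C * C) : seq (gate R n) := [:: @GSchi R n p.1; @GAinv R n; @GS0 R n p.2; @GA R n].

Lemma ip_psi0 chi (A : 'M[C]_n.+1) (a : R) :
  A \is unitarymx -> good_prob chi (A *m ket0 R n) = a%:C ->
  ip (A *m ket0 R n) (psi0 chi (A *m ket0 R n)) = 1 - a%:C.
Proof.
move=> hA ha.
have h1 : ip (A *m ket0 R n) (A *m ket0 R n) = 1 by rewrite ip_unitary // ip_ket0.
have e := ip_linD (A *m ket0 R n) (psi1 chi (A *m ket0 R n)) (psi0 chi (A *m ket0 R n)).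
rewrite -psi_split h1 ip_psi1 ha in e.
by rewrite e; ring.
Qed.

Lemma blk_act chi (A : 'M[C]_n.+1) (a : R) (p : C * C) (al be : C) :
  A \is unitarymx -> good_prob chi (A *m ket0 R n) = a%:C ->
  run chi A (blk p) (al *: psi1 chi (A *m ket0 R n) + be *: psi0 chi (A *m ket0 R n))
  = (cstep a p (al, be)).1 *: psi1 chi (A *m ket0 R n)
    + (cstep a p (al, be)).2 *: psi0 chi (A *m ket0 R n).
Proof.
move=> hA ha.
have h1 : ip (A *m ket0 R n) (A *m ket0 R n) = 1 by rewrite ip_unitary // ip_ket0.
have h0 : ip (A *m ket0 R n) (psi0 chi (A *m ket0 R n)) = 1 - a%:C.
  have e := ip_linD (A *m ket0 R n) (psi1 chi (A *m ket0 R n)) (psi0 chi (A *m ket0 R n)).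
  rewrite -psi_split h1 ip_psi1 ha in e.
  by rewrite e; ring.
rewrite /= Schi_act refl_act // ip_linD !ip_linZ ip_psi1 ha h0.
have hs := psi_split chi (A *m ket0 R n).
move: (psi1 chi _) (psi0 chi _) hs => P1 P0 hs.
rewrite hs /cstep /= rmorphB rmorph1.
apply/matrixP => i j; rewrite !mxE; ring.
Qed.

Lemma blks_act chi (A : 'M[C]_n.+1) (a : R) (L : seq (C * C)) (al be : C) :
  A \is unitarymx -> good_prob chi (A *m ket0 R n) = a%:C ->
  run chi A (flatten (map blk L))
    (al *: psi1 chi (A *m ket0 R n) + be *: psi0 chi (A *m ket0 R n))
  = (cfold a L (al, be)).1 *: psi1 chi (A *m ket0 R n)
    + (cfold a L (al, be)).2 *: psi0 chi (A *m ket0 R n).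
Proof.
move=> hA ha; elim: L al be => [//|p L IH] al be.
have -> : flatten (map blk (p :: L)) = blk p ++ flatten (map blk L) by [].
have -> : cfold a (p :: L) (al, be) = cfold a L (cstep a p (al, be)) by [].
rewrite run_cat (@blk_act chi A a p al be hA ha).
case: (cstep a p (al, be)) => x y.
exact: IH.
Qed.

Definition pad (k : nat) : seq (gate R n) := flatten (nseq k [:: @GA R n; @GAinv R n]).

Lemma pad_run chi (A : 'M[C]_n.+1) k v : A \is unitarymx -> run chi A (pad k) v = v.
Proof.
move=> hA; elim: k v => //= k IH v.
by rewrite IH mulKmx // unitarymx_unit.
Qed.

Lemma pad_ok k : circuit_ok (pad k).
Proof. by elim: k => //= k IH. Qed.

Lemma pad_cost k : cost (pad k) = (2 * k)%N.
Proof. elim: k => //= k IH; rewrite /cost /= -/(cost _) IH; lia. Qed.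

Lemma circuit_ok_cat (s1 s2 : seq (gate R n)) :
  circuit_ok s1 -> circuit_ok s2 -> circuit_ok (s1 ++ s2).
Proof. by elim: s1 => //= g s1 IH [h1 h2] h; split => //; apply: IH. Qed.

Lemma blks_ok (L : seq (C * C)) :
  all (fun p : C * C => (`|p.1| == 1) && (`|p.2| == 1)) L ->
  circuit_ok (flatten (map blk L)).
Proof.
elim: L => //= p L IH /andP [/andP [/eqP h1 /eqP h2] hL].
by do !split => //; apply: IH.
Qed.

Lemma blks_cost (L : seq (C * C)) : cost (flatten (map blk L)) = (2 * size L)%N.
Proof. elim: L => //= p L IH; rewrite /cost /= -/(cost _) IH; lia. Qed.

End Mat.


Definition good_L (R : realType) (a : R) (L : seq (R[i] * R[i])) : bool :=
  if (0 < a < 1) then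
    [&& all (fun p : R[i] * R[i] => (`|p.1| == 1) && (`|p.2| == 1)) L,
        (size L)%:R <= 4 / Num.sqrt a & (cfold a L (1, 1)).2 == 0]
  else L == [::].

Lemma good_L_ex (R : realType) (a : R) : exists L, good_L a L.
Proof.
case: (boolP (0 < a < 1)) => ha; last by exists [::]; rewrite /good_L (negPf ha).
have [L [h1 h2 h3]] := core ha.
by exists L; rewrite /good_L ha h1 h2 h3 eqxx.
Qed.

Definition Lof (R : realType) (a : R) := xchoose (good_L_ex a).

Definition alg (R : realType) (n : nat) (a : R) : seq (gate R n) :=
  @pad R n (Num.trunc (1 / Num.sqrt a)) ++ (@GA R n :: flatten (map (@blk R n) (Lof a))).

Lemma Lof_all (R : realType) (a : R) :
  all (fun p : R[i] * R[i] => (`|p.1| == 1) && (`|p.2| == 1)) (Lof a).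
Proof.
have := xchooseP (good_L_ex a); rewrite -/(Lof a) /good_L.
by case: ifP => _; [case/and3P | move/eqP ->].
Qed.

Lemma alg_ok (R : realType) n (a : R) : circuit_ok (alg n a).
Proof.
apply: circuit_ok_cat; first exact: pad_ok.
by split => //; apply: blks_ok; apply: Lof_all.
Qed.

Lemma alg_cost (R : realType) n (a : R) :
  cost (alg n a) = (2 * Num.trunc (1 / Num.sqrt a) + (1 + 2 * size (Lof a)))%N.
Proof.
rewrite /alg /cost count_cat -/(cost _) pad_cost /= -/(cost _) blks_cost.
by [].
Qed.

Theorem theorem3 (R : realType) :
  exists (c1 c2 : R), 0 < c1 /\ 0 < c2 /\
  exists alg : forall n : nat, R -> seq (gate R n),
    (forall (n : nat) (a : R), 0 < a <= 1 ->
       circuit_ok (alg n a) /\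
       c1 / Num.sqrt a <= (cost (alg n a))%:R <= c2 / Num.sqrt a) /\
    (forall (n : nat) (chi : int -> bool) (A : 'M[R[i]]_(n.+1)) (a : R),
       A \is unitarymx ->
       good_prob chi (A *m ket0 R n) = a%:C ->
       0 < a ->
       good_prob chi (run chi A (alg n a) (ket0 R n)) = 1).
Proof.
exists 1, 11; split; first by [].
split; first by [].
exists (@alg R); split.
  move=> n a /andP [a0 a1]; split; first exact: alg_ok.
  rewrite alg_cost !natrD.
  set s := Num.sqrt a.
  have s0 : 0 < s by rewrite sqrtr_gt0.
  have s1 : s <= 1 by rewrite /s -sqrtr1 ler_sqrt.
  have t1 : 1 <= 1 / s by rewrite ler_pdivlMr // mul1r.
  set t := 1 / s.
  have ht := truncn_itv (ltW (lt_le_trans ltr01 t1)).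
  move: ht; set P := Num.trunc t => /andP [hP1 hP2].
  rewrite -natr1 in hP2.
  have hm : (size (Lof a))%:R <= 4 * t.
    have := xchooseP (good_L_ex a); rewrite -/(Lof a) /good_L.
    case: ifP => _.
      by case/and3P => _ h _; rewrite /t mulrA mulr1.
    by move/eqP ->; rewrite /= mulr_ge0 // ltW // (lt_le_trans ltr01 t1).
  have e1 : 1 / s = t by [].
  have e11 : 11 / s = 11 * t by rewrite /t mulrA mulr1.
  rewrite e11.
  have hm0 : 0 <= (size (Lof a))%:R :> R by rewrite ler0n.
  have hp0 : 0 <= P%:R :> R by rewrite ler0n.
  move: (size (Lof a))%:R hm hm0 => m hm hm0.
  move: (P%:R) hP1 hP2 hp0 t1; rewrite e1 => p hP1 hP2 hp0 t1.
  apply/andP; split; lra.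
move=> n chi A a hA ha a0.
have hnorm : ip (run chi A (alg n a) (ket0 R n)) (run chi A (alg n a) (ket0 R n)) = 1.
  rewrite run_ip //; [exact: ip_ket0 | exact: alg_ok].
have hstate : run chi A (alg n a) (ket0 R n) =
   (cfold a (Lof a) (1, 1)).1 *: psi1 chi (A *m ket0 R n)
   + (cfold a (Lof a) (1, 1)).2 *: psi0 chi (A *m ket0 R n).
  rewrite /alg run_cat pad_run //.
  have -> : run chi A (@GA R n :: flatten (map (@blk R n) (Lof a))) (ket0 R n)
     = run chi A (flatten (map (@blk R n) (Lof a))) (A *m ket0 R n) by [].
  have e : A *m ket0 R n = 1 *: psi1 chi (A *m ket0 R n) + 1 *: psi0 chi (A *m ket0 R n).
    by rewrite !scale1r -psi_split.
  rewrite {1}e.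
  exact: blks_act.
have hL := xchooseP (good_L_ex a); rewrite -/(Lof a) /good_L in hL.
case: ifP hL => [ha01 /and3P [_ _ /eqP h2] | hna /eqP hL0].
  rewrite hstate h2 in hnorm.
  by rewrite hstate h2 good_prob_full.
rewrite hstate hL0 /= !scale1r -psi_split ha.
have h0 := ip_psi0 hA ha.
have := ip_psi0_ge0 chi (A *m ket0 R n).
have e : (1 - a)%:C = 1 - a%:C by rewrite rmorphB rmorph1.
rewrite h0 -e ler0c subr_ge0 => a1.
have a1' : 1 <= a by move: hna; rewrite a0 /= => /negbT; rewrite -leNgt.
by have -> : a = 1 by apply/eqP; rewrite eq_le a1 a1'.
Qed.
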